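(* Let $G$ be a finite group with $|G|\ge3$, let $k,\ell\in\mathbb N$ with $k<\ell$, and let $U_1,\ldots,U_k,V_1,\ldots,V_\ell\in\mathcal A(G)$ with $U_1\boldsymbol{\cdot}\ldots\boldsymbol{\cdot}U_k=V_1\boldsymbol{\cdot}\ldots\boldsymbol{\cdot}V_\ell$. Then there exist $\mu\in[1,k]$, $\lambda,\lambda'\in[1,\ell]$ with $\lambda\ne\lambda'$, and $g_1,g_2\in G$ such that $U_\mu=g_1\boldsymbol{\cdot}g_2\boldsymbol{\cdot}\ldots\boldsymbol{\cdot}g_m$ with $m\ge2$ and $g_1g_2\cdots g_m=1_G$, and $g_1\mid V_\lambda$ and $g_2\mid V_{\lambda'}$ in $\mathcal F(G)$.
   Context: Let $G$ be a finite group written multiplicatively with identity $1_G$. $\mathcal F(G)$ is the free abelian monoid with basis $G$; its elements are sequences $S=g_1\boldsymbol{\cdot}\ldots\boldsymbol{\cdot}g_\ell$ (unordered, repetitions allowed, operation $\boldsymbol{\cdot}$ = concatenation). $\pi(S)=\{g_{\tau(1)}\cdots g_{\tau(\ell)}:\tau\text{ a permutation of }[1,\ell]\}$, $\mathcal B(G)=\{S\in\mathcal F(G):1_G\in\pi(S)\}$, and $\mathcal A(G)$ is the set of atoms (irreducible elements) of the monoid $\mathcal B(G)$. *)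

(* Defs.v *)
(* Sequences over G (elements of F(G)) are represented by
   lists `seq gT`, considered up to permutation (perm_eq). *)
From mathcomp Require Import all_boot all_fingroup.
Set Implicit Arguments. Unset Strict Implicit. Unset Printing Implicit Defensive.

Local Open Scope group_scope.

Definition seq_prod (gT : finGroupType) (s : seq gT) : gT := \prod_(g <- s) g.

Definition pi_set (gT : finGroupType) (S : seq gT) (g : gT) : Prop :=
  exists t : seq gT, perm_eq t S /\ seq_prod t = g.

Definition in_B (gT : finGroupType) (S : seq gT) : Prop := pi_set S 1.

(* atoms of the monoid B(G): non-units (the only unit is the empty sequence)
   that admit no factorisation S = T . T' into two non-units of B(G) *)
Definition is_atom (gT : finGroupType) (S : seq gT) : Prop :=
  [/\ in_B S, S <> [::] &
      forall T T' : seq gT, perm_eq S (T ++ T') -> in_B T -> in_B T' ->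
        T = [::] \/ T' = [::]].

(* Main.v *)
Require Import Defs.
From mathcomp Require Import all_boot all_fingroup.
From Stdlib Require Import Classical.

Lemma prod_cat (gT : finGroupType) (s1 s2 : seq gT) :
  seq_prod (s1 ++ s2) = (seq_prod s1 * seq_prod s2)%g.
Proof. by rewrite /seq_prod big_cat. Qed.

Lemma rot_prod (gT : finGroupType) (s1 s2 : seq gT) :
  seq_prod (s1 ++ s2) = 1%g -> seq_prod (s2 ++ s1) = 1%g.
Proof.
rewrite !prod_cat => H.
have E : seq_prod s2 = (seq_prod s1)^-1%g.
  by rewrite -[seq_prod s2](mulKg (seq_prod s1)) H mulg1.
by rewrite E mulVg.
Qed.

Lemma atom1 (gT : finGroupType) (S : seq gT) :
  is_atom S -> (1%g \in S) -> S = [:: 1%g].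
Proof.
case=> [[t [pt Pt]] _ Hat] H1.
have H1t : 1%g \in t by rewrite (perm_mem pt).
case/splitPr: H1t pt Pt => t1 t2 pt Pt.
have HB : in_B (rem 1%g S).
  exists (t1 ++ t2); split.
  - rewrite -(perm_cons 1%g); apply: (perm_trans _ (perm_to_rem H1)).
    apply: perm_trans _ pt.
    by rewrite -cat1s perm_catCA.
  - by rewrite prod_cat; rewrite prod_cat /seq_prod big_cons mul1g in Pt.
have HB1 : in_B [:: (1 : gT)%g] by exists [:: (1 : gT)%g]; split => //; rewrite /seq_prod big_seq1.
case: (Hat [:: 1%g] (rem 1%g S) (perm_to_rem H1) HB1 HB) => // E.
have := perm_to_rem H1; rewrite E => Hp.
exact: perm_small_eq Hp.
Qed.

Lemma path_lem (T : eqType) (L : T -> nat -> Prop) (t : seq T) :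
  (forall y, y \in t -> exists p, L y p) ->
  forall x x' p p', x \in t -> x' \in t -> L x p -> L x' p' -> p <> p' ->
  (exists t1 a b t2 p q, t = t1 ++ a :: b :: t2 /\ L a p /\ L b q /\ p <> q) \/
  (exists t1 y t2 p q, t = t1 ++ y :: t2 /\ L y p /\ L y q /\ p <> q).
Proof.
elim: t => [|a t IH] Hl x x' p p' //.
case: t IH Hl => [|b t] IH Hl.
  rewrite !inE => /eqP-> /eqP-> Lp Lp' npp.
  by right; exists [::], a, [::], p, p'.
move=> Hx Hx' Lx Lx' npp.
case: (classic (exists p q, L a p /\ L b q /\ p <> q)) => [[p0 [q0 [? [? ?]]]]|Hn].
  by left; exists [::], a, b, t, p0, q0.
have Heq : forall p q, L a p -> L b q -> p = q.
  move=> p0 q0 ? ?; apply: NNPP => ?; apply: Hn; by exists p0, q0.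
have [r Lr] : exists r, L b r by apply: Hl; rewrite !inE eqxx orbT.
have Hmv : forall z p0, z \in a :: b :: t -> L z p0 ->
    exists z', z' \in b :: t /\ L z' p0.
  move=> z p0; rewrite inE => /orP [/eqP->|Hz] Lz.
    exists b; split; first by rewrite inE eqxx.
    by rewrite (Heq _ _ Lz Lr).
  by exists z.
have [y [Hy Ly]] := Hmv _ _ Hx Lx.
have [y' [Hy' Ly']] := Hmv _ _ Hx' Lx'.
have Hl' : forall y, y \in b :: t -> exists p, L y p.
  by move=> y0 Hy0; apply: Hl; rewrite inE Hy0 orbT.
case: (IH Hl' y y' p p' Hy Hy' Ly Ly' npp)
  => [[t1 [a0 [b0 [t2 [p0 [q0 [E H]]]]]]]|[t1 [y0 [t2 [p0 [q0 [E H]]]]]]].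
  by left; exists (a :: t1), a0, b0, t2, p0, q0; rewrite E.
by right; exists (a :: t1), y0, t2, p0, q0; rewrite E.
Qed.

Theorem lemma5p1 (gT : finGroupType) (Us Vs : seq (seq gT)) :
  3 <= #|[set: gT]| ->
  size Us < size Vs ->
  (forall U, U \in Us -> is_atom U) ->
  (forall V, V \in Vs -> is_atom V) ->
  perm_eq (flatten Us) (flatten Vs) ->
  exists (mu lam lam' : nat) (g1 g2 : gT) (rest : seq gT),
    [/\ mu < size Us, lam < size Vs, lam' < size Vs & lam <> lam'] /\
    perm_eq (nth [::] Us mu) [:: g1, g2 & rest] /\
    seq_prod [:: g1, g2 & rest] = 1%g /\
    g1 \in nth [::] Vs lam /\ g2 \in nth [::] Vs lam'.
Proof.
move=> _ Hsz HU HV Hp.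
apply: NNPP => NG.
have Lab : forall y, y \in flatten Us -> exists p, p < size Vs /\ y \in nth [::] Vs p.
  move=> y; rewrite (perm_mem Hp) => /flattenP [V HVin Hy].
  case/(nthP [::]): HVin => p Hp' E; exists p; by rewrite E.
have Step1 : forall mu x x' p p', mu < size Us -> x \in nth [::] Us mu ->
    x' \in nth [::] Us mu -> p < size Vs -> p' < size Vs -> x \in nth [::] Vs p ->
    x' \in nth [::] Vs p' -> p <> p' -> x != 1%g -> False.
  move=> mu x x' p p' Hmu Hx Hx' Hpl Hpl' Hxp Hxp' npp nx1.
  have Hat := HU _ (mem_nth [::] Hmu).
  case: (Hat) => [[t [pt Pt]] _ _].
  have Ht : forall y, y \in t -> exists p, (fun y p => p < size Vs /\ y \in nth [::] Vs p) y p.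
    move=> y Hy; apply: Lab; apply/flattenP; exists (nth [::] Us mu).
      exact: mem_nth. by rewrite -(perm_mem pt).
  have Hsz2 : 1 < size t.
    case: t pt Pt Ht => [|a [|b t]] pt Pt Ht //.
      by rewrite -(perm_mem pt) in Hx.
    rewrite -(perm_mem pt) inE in Hx.
    by rewrite /seq_prod big_seq1 in Pt; rewrite (eqP Hx) Pt eqxx in nx1.
  have Hxt : x \in t by rewrite (perm_mem pt).
  have Hxt' : x' \in t by rewrite (perm_mem pt).
  case: (@path_lem _ (fun y p => p < size Vs /\ y \in nth [::] Vs p) t Ht _ _ _ _ Hxt Hxt' (conj Hpl Hxp) (conj Hpl' Hxp') npp)
    => [[t1 [a [b [t2 [p0 [q0 [E [[Lp0 Ha] [[Lq0 Hb] npq]]]]]]]]]|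
        [t1 [y [t2 [p0 [q0 [E [[Lp0 Ha] [[Lq0 Hb] npq]]]]]]]]].
    apply: NG; exists mu, p0, q0, a, b, (t2 ++ t1); split; first by [].
    split.
      rewrite perm_sym; apply: perm_trans _ pt.
      change (perm_eq ((a :: b :: t2) ++ t1) t); by rewrite E perm_catC.
    split; last by [].
    change (seq_prod ((a :: b :: t2) ++ t1) = 1%g); apply: rot_prod; by rewrite -E.
  have Hs : size t = (size (t2 ++ t1)).+1.
    by rewrite E !size_cat /= addnS addnC.
  case E2 : (t2 ++ t1) Hs => [|z rest] Hs; first by rewrite Hs in Hsz2.
  have Hz : z \in t.
    have : z \in t2 ++ t1 by rewrite E2 mem_head.
    by rewrite E !mem_cat inE => /orP [->|->]; rewrite ?orbT.
  have [r [Lr Hzr]] := Ht z Hz.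
  have Hfin : forall pp, pp < size Vs -> y \in nth [::] Vs pp -> pp <> r -> False.
    move=> pp Hpp Hy npr.
    apply: NG; exists mu, pp, r, y, z, rest; split; first by [].
    split.
      rewrite perm_sym; apply: perm_trans _ pt.
      rewrite -E2; change (perm_eq ([:: y] ++ (t2 ++ t1)) t).
      by rewrite E catA perm_catC.
    split; last by [].
    rewrite -E2; change (seq_prod ((y :: t2) ++ t1) = 1%g); apply: rot_prod; by rewrite -E.
  case: (classic (p0 = r)) => [Epr|]; last exact: Hfin.
  by apply: (Hfin q0) => // Eqr; apply: npq; rewrite Epr Eqr.
pose p1 := [:: (1 : gT)%g].
have C1 : forall L : seq (seq gT), (forall S, S \in L -> is_atom S) ->
    count_mem 1%g (flatten L) = count (pred1 p1) L.
  elim=> [|S L IH] HL //=.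
  rewrite count_cat IH; last by move=> S0 H; apply: HL; rewrite inE H orbT.
  congr (_ + _).
  case: (boolP (1%g \in S)) => H1.
    by rewrite (@atom1 _ _ (HL S (mem_head _ _)) H1) /= !eqxx.
  have -> : count_mem 1%g S = 0.
    by apply/eqP; rewrite -leqn0 leqNgt -has_count has_pred1.
  by case: eqP => // E; move: H1; rewrite E inE eqxx.
have Ceq : count (pred1 p1) Us = count (pred1 p1) Vs.
  by rewrite -C1 // -C1 //; apply/(seq.permP _ _).
have Ciota : forall (T : Type) (a : pred T) x0 (s : seq T),
    count a s = size [seq i <- iota 0 (size s) | a (nth x0 s i)].
  by move=> T a x0 s; rewrite size_filter -[in LHS](mkseq_nth x0 s) /mkseq count_map.
set I := [seq i <- iota 0 (size Vs) | predC (pred1 p1) (nth [::] Vs i)].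
set J := [seq i <- iota 0 (size Us) | predC (pred1 p1) (nth [::] Us i)].
set g := fun i => find (fun U => head 1%g (nth [::] Vs i) \in U) Us.
have HgI : forall i, i \in I ->
    [/\ g i < size Us, head 1%g (nth [::] Vs i) \in nth [::] Us (g i),
        i < size Vs, head 1%g (nth [::] Vs i) \in nth [::] Vs i
      & head 1%g (nth [::] Vs i) != 1%g].
  move=> i; rewrite mem_filter mem_iota /= add0n => /andP [Hne Hi].
  have HVi := HV _ (mem_nth [::] Hi).
  have Hnil : nth [::] Vs i <> [::] by case: HVi.
  have Hx : head 1%g (nth [::] Vs i) \in nth [::] Vs i.
    by case: (nth [::] Vs i) Hnil => // a s _; exact: mem_head.
  have Hx1 : head 1%g (nth [::] Vs i) != 1%g.
    apply/negP => /eqP E; rewrite E in Hx.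
    by rewrite (@atom1 _ _ HVi Hx) eqxx in Hne.
  have Hhas : has (fun U => head 1%g (nth [::] Vs i) \in U) Us.
    have : head 1%g (nth [::] Vs i) \in flatten Vs.
      by apply/flattenP; exists (nth [::] Vs i) => //; exact: mem_nth.
    rewrite -(perm_mem Hp) => /flattenP [U HUin HxU].
    by apply/hasP; exists U.
  split => //; first by rewrite /g -has_find.
  exact: (nth_find [::] Hhas).
have Hsub : {subset map g I <= J}.
  move=> j /mapP [i Hi ->]; have [H1 H2 _ _ H5] := HgI i Hi.
  rewrite mem_filter mem_iota /= add0n H1 andbT.
  apply/negP => /eqP E; rewrite E inE in H2.
  by rewrite H2 in H5.
have Huniq : uniq (map g I).
  rewrite map_inj_in_uniq ?filter_uniq ?iota_uniq // => i i' Hi Hi' E.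
  apply: NNPP => ne.
  have [H1 H2 H3 H4 H5] := HgI i Hi.
  have [H1' H2' H3' H4' H5'] := HgI i' Hi'.
  rewrite -E in H2'.
  exact: (Step1 (g i) _ _ i i' H1 H2 H2' H3 H3' H4 H4' ne H5).
have := uniq_leq_size Huniq Hsub.
rewrite size_map -!Ciota.
move: (count_predC (pred1 p1) Us) (count_predC (pred1 p1) Vs).
rewrite Ceq => EU EV H.
by rewrite -EU -EV ltn_add2l ltnNge H in Hsz.
Qed.
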